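(* Let $A,B,C$ be tridendriform algebras over a field $\mathbb{K}$. Then, under the canonical identification of $\overline{A}\otimes(\overline{B}\otimes\overline{C})$ with $(\overline{A}\otimes\overline{B})\otimes\overline{C}$, the tridendriform algebras $A\overline{\otimes}(B\overline{\otimes}C)$ and $(A\overline{\otimes}B)\overline{\otimes}C$ coincide: they have the same underlying subspace (spanned by the $a\otimes b\otimes c$, $a\in\overline A,b\in\overline B,c\in\overline C$, not all three equal to $1$) and the same three products.
   Context: A tridendriform algebra over $\mathbb{K}$ is a vector space $A$ with three bilinear products $\prec,\cdot,\succ$ such that, writing $a*b=a\prec b+a\cdot b+a\succ b$, for all $a,b,c\in A$: $(a\prec b)\prec c=a\prec(b*c)$, $(a\succ b)\prec c=a\succ(b\prec c)$, $(a*b)\succ c=a\succ(b\succ c)$, $(a\succ b)\cdot c=a\succ(b\cdot c)$, $(a\prec b)\cdot c=a\cdot(b\succ c)$, $(a\cdot b)\prec c=a\cdot(b\prec c)$, $(a\cdot b)\cdot c=a\cdot(b\cdot c)$. The augmentation of a tridendriform algebra $A$ is $\overline{A}=\mathbb{K}1\oplus A$, where $1$ is a unit for $*$, and for $a\in A$: $1\prec a=0$, $a\prec 1=a$, $1\succ a=a$, $a\succ 1=0$, $1\cdot a=a\cdot 1=0$. For tridendriform algebras $A,B$, $A\overline{\otimes}B:=(A\otimes B)\oplus(\mathbb{K}1\otimes B)\oplus(A\otimes\mathbb{K}1)\subseteq\overline A\otimes\overline B$, with products, for $\ltimes\in\{\prec,\cdot,\succ\}$: $(a\otimes 1)\ltimes(c\otimes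 1)=(a\ltimes c)\otimes 1$ for $a,c\in A$, and $(a\otimes b)\ltimes(c\otimes d)=(a*c)\otimes(b\ltimes d)$ whenever $b,d$ are not both equal to $1$ (augmented conventions). This is a tridendriform algebra, so $A\overline{\otimes}(B\overline{\otimes}C)$ and $(A\overline{\otimes}B)\overline{\otimes}C$ are defined (the augmentation of $B\overline\otimes C$ is identified with $\overline B\otimes\overline C$, its unit being $1\otimes 1$). *)

(* Defs.v *)
From HB Require Import structures.
From mathcomp Require Import all_boot all_order all_algebra.
Set Implicit Arguments. Unset Strict Implicit. Unset Printing Implicit Defensive.
Import GRing.Theory.
Local Open Scope ring_scope.

Inductive top := Prec | Dot | Succ.

Section TD.
Variable K : fieldType.

Record tridend := Tridend {
  td_car :> lmodType K;
  td_op : top -> td_car -> td_car -> td_car;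
  td_linl : forall o (k : K) x x' y, td_op o (k *: x + x') y = k *: td_op o x y + td_op o x' y;
  td_linr : forall o (k : K) x y y', td_op o x (k *: y + y') = k *: td_op o x y + td_op o x y';
  td_ax1 : forall a b c, td_op Prec (td_op Prec a b) c
     = td_op Prec a (td_op Prec b c + td_op Dot b c + td_op Succ b c);
  td_ax2 : forall a b c, td_op Prec (td_op Succ a b) c = td_op Succ a (td_op Prec b c);
  td_ax3 : forall a b c, td_op Succ (td_op Prec a b + td_op Dot a b + td_op Succ a b) c
     = td_op Succ a (td_op Succ b c);
  td_ax4 : forall a b c, td_op Dot (td_op Succ a b) c = td_op Succ a (td_op Dot b c);
  td_ax5 : forall a b c, td_op Dot (td_op Prec a b) c = td_op Dot a (td_op Succ b c);
  td_ax6 : forall a b c, td_op Prec (td_op Dot a b) c = td_op Dot a (td_op Prec b c);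
  td_ax7 : forall a b c, td_op Dot (td_op Dot a b) c = td_op Dot a (td_op Dot b c)
}.

Definition td_star (A : tridend) (a b : A) : A :=
  td_op Prec a b + td_op Dot a b + td_op Succ a b.

(* Augmentation Abar = K 1 (+) A, as the K-vector space K x A. *)
Definition Abar (A : tridend) : lmodType K := (K^o * td_car A)%type.
Definition one (A : tridend) : Abar A := (1, 0).
Definition emb (A : tridend) (a : A) : Abar A := (0, a).

(* Generators of Abar: an element of A or the unit 1 (encoded by None). *)
Definition inj (A : tridend) (x : option A) : Abar A :=
  if x is Some a then emb a else one A.

Definition ostar (A : tridend) (x y : option A) : option A :=
  match x, y with
  | None, _ => y
  | _, None => x
  | Some a, Some b => Some (td_star a b)
  end.

(* Augmented products with at least one argument in A (value in A):
   1 < a = 0, a < 1 = a, 1 > a = a, a > 1 = 0, 1 . a = a . 1 = 0.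
   (The case 1 (op) 1 is undefined and never used; it is set to 0.) *)
Definition aop (A : tridend) (o : top) (x y : option A) : A :=
  match x, y with
  | Some a, Some b => td_op o a b
  | None, Some b => if o is Succ then b else 0
  | Some a, None => if o is Prec then a else 0
  | None, None => 0
  end.

(* Tensors are handled through test maps: an element of a tensor product
   is known through its images under all multilinear maps.  Here
   sigma : Abar X -> Abar Y -> W is a bilinear map, and
   tens_op o sigma u u' is the image under (the linear map induced by) sigma
   of the product  u (op) u'  in the augmentation of X (x)bar Y, where
   u = x (x) y is a generator encoded by a pair of options
   ((None,None) = 1 (x) 1 is the unit). *)
Definition tens_op (X Y : tridend) (W : lmodType K) (o : top)
    (sigma : Abar X -> Abar Y -> W)
    (u u' : option X * option Y) : W :=
  match u, u' with
  | (None, None), (None, None) => 0 (* undefined, never used *)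
  | (None, None), (b', c') => if o is Succ then sigma (inj b') (inj c') else 0
  | (b, c), (None, None) => if o is Prec then sigma (inj b) (inj c) else 0
  | (b, c), (b', c') =>
      match c, c' with
      | None, None => sigma (emb (aop o b b')) (one Y)
      | _, _ => sigma (inj (ostar b b')) (emb (aop o c c'))
      end
  end.

Definition tens_star (X Y : tridend) (W : lmodType K)
    (sigma : Abar X -> Abar Y -> W) (u u' : option X * option Y) : W :=
  match u, u' with
  | (None, None), (None, None) => sigma (one X) (one Y)
  | _, _ => tens_op Prec sigma u u' + tens_op Dot sigma u u' + tens_op Succ sigma u u'
  end.

Definition trilinear (A B C : tridend) (W : lmodType K)
    (tau : Abar A -> Abar B -> Abar C -> W) : Prop :=
  [/\ forall (k : K) x x' y z, tau (k *: x + x') y z = k *: tau x y z + tau x' y z,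
      forall (k : K) x y y' z, tau x (k *: y + y') z = k *: tau x y z + tau x y' z
    & forall (k : K) x y z z', tau x y (k *: z + z') = k *: tau x y z + tau x y z'].

(* Image under tau of the product (op) in A (x)bar (B (x)bar C) of the
   generators a (x) (b (x) c) and a' (x) (b' (x) c') (not equal to 1 (x) 1 (x) 1). *)
Definition left_prod (A B C : tridend) (W : lmodType K)
    (tau : Abar A -> Abar B -> Abar C -> W) (o : top)
    (x y : option A * (option B * option C)) : W :=
  let: (a, u) := x in let: (a', u') := y in
  match u, u' with
  | (None, None), (None, None) => tau (emb (aop o a a')) (one B) (one C)
  | _, _ => tens_op o (tau (inj (ostar a a'))) u u'
  end.

(* Image under tau of the product (op) in (A (x)bar B) (x)bar C of the
   generators (a (x) b) (x) c and (a' (x) b') (x) c'. *)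
Definition right_prod (A B C : tridend) (W : lmodType K)
    (tau : Abar A -> Abar B -> Abar C -> W) (o : top)
    (x y : (option A * option B) * option C) : W :=
  let: (v, c) := x in let: (v', c') := y in
  match c, c' with
  | None, None => tens_op o (fun p q => tau p q (one C)) v v'
  | _, _ => tens_star (fun p q => tau p q (emb (aop o c c'))) v v'
  end.

Definition is_unit3 (A B C : tridend) (a : option A) (b : option B) (c : option C) : bool :=
  match a, b, c with None, None, None => true | _, _, _ => false end.

End TD.

(* Main.v *)
Require Import Defs.
From mathcomp Require Import all_boot all_order all_algebra.
Import GRing.Theory.
Local Open Scope ring_scope.

Lemma embD (K : fieldType) (A : tridend K) (x y : A) : emb (x + y) = emb x + emb y.
Proof. by rewrite /emb; apply/eqP; rewrite xpair_eqE /= addr0 !eqxx. Qed.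

Lemma emb0 (K : fieldType) (A : tridend K) : emb (0 : A) = 0.
Proof. by []. Qed.

Lemma sum9 (V : zmodType) (x1 x2 x3 y1 y2 y3 z1 z2 z3 : V) :
  x1 + x2 + x3 + (y1 + y2 + y3) + (z1 + z2 + z3) =
  x1 + y1 + z1 + (x2 + y2 + z2) + (x3 + y3 + z3).
Proof.
rewrite (addrACA (x1+x2) x3 (y1+y2) y3) (addrACA x1 x2 y1 y2).
rewrite (addrACA (x1+y1+(x2+y2)) (x3+y3) (z1+z2) z3).
by rewrite (addrACA (x1+y1) (x2+y2) z1 z2).
Qed.

Theorem mainTheorem4 (K : fieldType) (A B C : tridend K) (W : lmodType K)
    (tau : Abar A -> Abar B -> Abar C -> W) (Htau : trilinear tau)
    (o : top) (a a' : option A) (b b' : option B) (c c' : option C) :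
  ~~ is_unit3 a b c -> ~~ is_unit3 a' b' c' ->
  left_prod tau o (a, (b, c)) (a', (b', c')) =
  right_prod tau o ((a, b), c) ((a', b'), c').
Proof.
case: Htau => H1 H2 H3.
have D1 : forall x x' y z, tau (x + x') y z = tau x y z + tau x' y z.
  by move=> x x' y z; have := H1 1 x x' y z; rewrite !scale1r.
have D2 : forall x y y' z, tau x (y + y') z = tau x y z + tau x y' z.
  by move=> x y y' z; have := H2 1 x y y' z; rewrite !scale1r.
have D3 : forall x y z z', tau x y (z + z') = tau x y z + tau x y z'.
  by move=> x y z z'; have := H3 1 x y z z'; rewrite !scale1r.
have Z1 : forall y z, tau 0 y z = 0.
  by move=> y z; have h := D1 0 0 y z; rewrite addr0 in h; apply: (addrI (tau 0 y z)); rewrite addr0 -h.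
have Z2 : forall x z, tau x 0 z = 0.
  by move=> x z; have h := D2 x 0 0 z; rewrite addr0 in h; apply: (addrI (tau x 0 z)); rewrite addr0 -h.
have Z3 : forall x y, tau x y 0 = 0.
  by move=> x y; have h := D3 x y 0 0; rewrite addr0 in h; apply: (addrI (tau x y 0)); rewrite addr0 -h.
case: o; case: a => [a|]; case: a' => [a'|]; case: b => [b|]; case: b' => [b'|];
  case: c => [c|]; case: c' => [c'|] => //= _ _;
  rewrite /td_star ?embD ?D1 ?D2 ?D3 ?emb0 ?Z1 ?Z2 ?Z3 ?addr0 ?add0r //.
all: exact: sum9.
Qed.
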